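(* Let $L\ge 1$ and $n_1,\dots,n_L\ge 1$ be integers, $N=\sum_l n_l$, and write vectors in $\mathbb{R}^N$ in blocks $x=[x_1^\top,\dots,x_L^\top]^\top$, $x_l\in\mathbb{R}^{n_l}$. Let $g,v\in\mathbb{R}^N$ and $d\in\mathbb{R}^N$ with positive entries, $D=\mathrm{Diag}(d)$, and set $w_l=v_l-g_l\oslash d_l$. Assume each $w_l$ has at least one positive and at least one negative entry. Consider $$\min_{u,\alpha,\beta}\; g^\top(u-v)+\tfrac12(u-v)^\top D(u-v)\quad\text{s.t.}\quad u_l\in\{-\beta_l,0,\alpha_l\}^{n_l},\ \alpha_l>0,\ \beta_l>0,\ l=1,\dots,L.$$ If $(u,\alpha,\beta)$ is a minimizer, then for every $l$, $$u_l=\alpha_l p_l+\beta_l q_l,\qquad p_l=I^+_{\alpha_l/2}(w_l),\quad q_l=I^-_{\beta_l/2}(w_l),$$ $$\alpha_l=\frac{\|p_l\odot d_l\odot w_l\|_1}{\|p_l\odot d_l\|_1},\qquad \beta_l=\frac{\|q_l\odot d_l\odot w_l\|_1}{\|q_l\odot d_l\|_1}.$$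
   Context: $\odot$ and $\oslash$ are element-wise multiplication and division; $\mathrm{Diag}(x)$ is the diagonal matrix with diagonal $x$. For a threshold $\Delta$: $[I^+_\Delta(x)]_i=1$ if $x_i>\Delta$ and $0$ otherwise; $[I^-_\Delta(x)]_i=-1$ if $x_i<-\Delta$ and $0$ otherwise. *)

(* Defs.v *)
(* Vectors in R^N, N = sum_l n_l, are represented blockwise
   as families  x : forall l : 'I_L, 'rV[R]_(n l). *)
From mathcomp Require Import all_boot all_order all_algebra.
From mathcomp Require Import reals.
Set Implicit Arguments. Unset Strict Implicit. Unset Printing Implicit Defensive.
Import Order.TTheory GRing.Theory Num.Theory.
Local Open Scope ring_scope.

Section Defs.
Variable R : realType.

Definition hmul k (x y : 'rV[R]_k) : 'rV[R]_k := \row_i (x 0 i * y 0 i).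
Definition hdiv k (x y : 'rV[R]_k) : 'rV[R]_k := \row_i (x 0 i / y 0 i).

Definition Ipos k (Delta : R) (x : 'rV[R]_k) : 'rV[R]_k :=
  \row_i (if Delta < x 0 i then 1 else 0).
Definition Ineg k (Delta : R) (x : 'rV[R]_k) : 'rV[R]_k :=
  \row_i (if x 0 i < - Delta then -1 else 0).

Definition norm1 k (x : 'rV[R]_k) : R := \sum_i `|x 0 i|.

Definition objective L (n : 'I_L -> nat) (g v d u : forall l : 'I_L, 'rV[R]_(n l)) : R :=
  \sum_(l < L) \sum_(i < n l)
     (g l 0 i * (u l 0 i - v l 0 i)
      + 2^-1 * (d l 0 i * (u l 0 i - v l 0 i) ^+ 2)).

Definition feasible L (n : 'I_L -> nat) (u : forall l : 'I_L, 'rV[R]_(n l))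
    (alpha beta : 'I_L -> R) : Prop :=
  forall l : 'I_L, 0 < alpha l /\ 0 < beta l /\
    forall i : 'I_(n l), u l 0 i \in [:: - beta l; 0; alpha l].

End Defs.

(* Main.v *)
Require Import Defs.
From mathcomp Require Import all_boot all_order all_algebra.
From mathcomp Require Import reals.
From mathcomp Require Import ring lra.
Import Order.TTheory GRing.Theory Num.Theory.
Local Open Scope ring_scope.

Section Block.
Variable R : realFieldType.
Variables (m : nat) (dd ww : 'I_m -> R).
Definition Jb (f : 'I_m -> R) := \sum_j dd j * (f j - ww j)^+2.

Lemma mem3 (z p q r : R) : (z \in [:: p; q; r]) = [|| z == p, z == q | z == r].
Proof. by rewrite !inE. Qed.

Variables (y : 'I_m -> R) (al be : R).
Hypotheses (hdd : forall j, 0 < dd j) (ha : 0 < al) (hb : 0 < be)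
  (hy : forall j, y j \in [:: -be; 0; al])
  (P : forall a b (x : 'I_m -> R), 0 < a -> 0 < b ->
        (forall j, x j \in [:: -b; 0; a]) -> Jb y <= Jb x).

Definition Ab := \sum_j (if y j == al then dd j * (al - ww j) else 0).
Definition Bb := \sum_j (if y j == al then dd j else 0).

Lemma star i t c : 0 < al + t -> c \in [:: -be; 0; al + t] ->
  0 <= 2 * t * Ab + t ^+ 2 * Bb
       - (if y i == al then dd i * ((al + t - ww i) ^+ 2 - (al - ww i) ^+ 2) else 0)
       + dd i * ((c - ww i) ^+ 2 - (y i - ww i) ^+ 2).
Proof.
move=> ht hc.
pose x j := if j == i then c else if y j == al then al + t else y j.
have hx : forall j, x j \in [:: -be; 0; al + t].
  move=> j; rewrite /x; case: eqP => _ //.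
  case: ifP => [_|hne]; first by rewrite !inE eqxx !orbT.
  move: (hy j) hne; rewrite !inE => /or3P [] /eqP ->; rewrite ?eqxx ?orbT //.
have := P _ _ x ht hb hx.
pose E j := if y j == al then dd j * ((al + t - ww j) ^+ 2 - (al - ww j) ^+ 2) else 0.
have hE : 2 * t * Ab + t ^+ 2 * Bb = \sum_j E j.
  rewrite /Ab /Bb !mulr_sumr -big_split; apply eq_bigr => j _; rewrite /E.
  by case: ifP => _ /=; [ring | rewrite !mulr0 addr0].
rewrite hE -subr_ge0 /Jb -sumrB (bigD1 i) //= (bigD1 i (P := xpredT)) //=.
rewrite /x eqxx -/(E i).
have -> : \sum_(j | j != i) (dd j * ((if j == i then c else if y j == al then al + t else y j) - ww j) ^+ 2 -
      dd j * (y j - ww j) ^+ 2) = \sum_(j | j != i) E j.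
  apply eq_bigr => j /negbTE ->; rewrite /E; case: eqP => [->|_]; last by rewrite subrr.
  rewrite mulrBr. done.
move=> h; lra.
Qed.

Hypothesis hk : exists k, 0 < ww k.

Lemma half : (forall i, y i = al <-> al / 2 < ww i) /\ Ab = 0 /\ exists j, y j = al.
Proof.
have ha' := ha; have hb' := hb.
have Bge0 : 0 <= Bb by apply sumr_ge0 => j _; case: ifP => _ //; exact: ltW.
case: hk => k wk.
have hAB : forall t, 0 < al + t -> 0 <= 2 * t * Ab + t ^+ 2 * Bb.
  move=> t ht.
  have := @star k t (if y k == al then al + t else y k) ht.
  case: eqP => [e|ne].
    rewrite e => h; have := h (_ : al + t \in _); rewrite !inE eqxx !orbT => h2.
    have := h2 isT; lra.
  move: (hy k) ne; rewrite !inE => /or3P [] /eqP -> ne; try by case: ne.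
    by rewrite eqxx => h; have := h isT; lra.
  by rewrite eqxx orbT => h; have := h isT; lra.
have A0 : Ab = 0.
  case: (ltrgtP Ab 0) => // hA.
    pose t := - Ab / (Bb + 1).
    have e : t * (Bb + 1) = - Ab by rewrite /t mulfVK // lt0r_neq0 // ltr_pwDr.
    have tp : 0 < t by rewrite /t divr_gt0 // ?oppr_gt0 // ltr_pwDr.
    clearbody t.
    have ht : 0 < al + t by rewrite addr_gt0.
    have := hAB t ht.
    have h1 : t * (t * Bb) <= t * (t * (Bb + 1)) by rewrite ler_pM2l // ler_pM2l // lerDl ler01.
    rewrite e in h1.
    have h2 : 0 < t * (- Ab) by rewrite mulr_gt0 // oppr_gt0.
    nra.
  pose s := Bb + 2 * Ab / al.
  have sp : 0 < s by rewrite /s ltr_wpDl // divr_gt0 // mulr_gt0.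
  pose t := - Ab / s.
  have e : t * s = - Ab by rewrite /t mulfVK // lt0r_neq0.
  have e2 : s * al = Bb * al + 2 * Ab by rewrite /s mulrDl mulfVK // lt0r_neq0.
  have tn : t < 0 by rewrite /t mulNr oppr_lt0 divr_gt0.
  clearbody t s.
  have e3 : (al + t) * s = Bb * al + Ab.
    by rewrite mulrDl [al * s]mulrC e2 e; ring.
  have ht : 0 < al + t.
    rewrite -(pmulr_lgt0 _ sp) e3; exact: ltr_wpDl (mulr_ge0 Bge0 (ltW ha)) hA.
  have r : (2*Ab + t*Bb)*(s*al) = 2*Ab*(s*al) + Bb*al*(t*s) by ring.
  have pos : 0 < 2*Ab + t*Bb.
    rewrite -(pmulr_lgt0 _ (mulr_gt0 sp ha)) r [s * al]e2 e.
    have h1 : 0 <= Ab*Bb*al by rewrite !mulr_ge0 //; exact: ltW.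
    have h2 : 0 < Ab*Ab by rewrite mulr_gt0.
    lra.
  have neg : t * (2*Ab + t*Bb) < 0 by rewrite nmulr_rlt0.
  have := hAB t ht.
  lra.
have ex : exists j, y j = al.
  case: (pickP (fun j => y j == al)) => [j /eqP hj|none]; first by exists j.
  have B0 : Bb = 0 by apply big1 => j _; rewrite none.
  have := @star k (ww k - al) (al + (ww k - al)) _ _.
  rewrite A0 B0 none.
  have h0 : 0 < al + (ww k - al) by lra.
  rewrite !inE eqxx !orbT => /(_ h0 isT).
  move: (hy k) (none k); rewrite !inE => /or3P [] /eqP ->; rewrite ?eqxx // => _ h.
    have h1 : 0 < dd k * (be + ww k) ^+ 2 by rewrite mulr_gt0 // exprn_gt0 // addr_gt0.
    nra.
  have h1 : 0 < dd k * (ww k) ^+ 2 by rewrite mulr_gt0 // exprn_gt0.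
  nra.
split; last exact: (conj A0 ex).
move=> i; have hs := splitr al; split.
  move=> hi; case: (ltrP (al / 2) (ww i)) => // hle.
  have ep : 0 < al - ww i  by have := ha; lra.
  pose t := dd i * (al - ww i) / (Bb + 1).
  have e : t * (Bb + 1) = dd i * (al - ww i) by rewrite /t mulfVK // lt0r_neq0 // ltr_pwDr.
  have tp : 0 < t by rewrite /t divr_gt0 ?mulr_gt0 // ltr_pwDr.
  clearbody t.
  have ht : 0 < al + t by lra.
  have := @star i t 0 ht.
  rewrite !inE eqxx orbT hi eqxx A0 => /(_ isT) h.
  have h1 : t * (t * Bb) <= t * (t * (Bb + 1)) by rewrite ler_pM2l // ler_pM2l // lerDl ler01.
  rewrite e in h1.
  have h2 : 0 < dd i * t * (al - ww i) by rewrite mulr_gt0 // mulr_gt0.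
  have h3 : 0 <= dd i * al * (al - 2 * ww i) by rewrite mulr_ge0 // ?mulr_ge0 //; [exact: ltW|exact: ltW|lra].
  have h4 : 0 <= dd i * t ^+ 2 by rewrite mulr_ge0 // ?sqr_ge0 //; exact: ltW.
  nra.
move=> hi; move: (hy i); rewrite !inE => /or3P [] /eqP e //.
  have := @star i 0 al _ _; rewrite addr0 !inE eqxx !orbT => /(_ ha isT).
  rewrite e; case: eqP => [|_]; first lra.
  have h : 0 < dd i * (al + be) * (2 * ww i - al + be) by rewrite !mulr_gt0 //; lra.
  nra.
have := @star i 0 al _ _; rewrite addr0 !inE eqxx !orbT => /(_ ha isT).
rewrite e; case: eqP => [|_]; first lra.
have h : 0 < dd i * al * (2 * ww i - al) by rewrite !mulr_gt0 //; lra.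
nra.
Qed.
End Block.
Arguments Jb {R m}.

Lemma JbN (R : realFieldType) m (dd ww x : 'I_m -> R) :
  Jb dd (fun j => - ww j) x = Jb dd ww (fun j => - x j).
Proof.
rewrite /Jb; apply eq_bigr => j _; congr (_ * _).
have h : forall a b : R, (a - - b) ^+ 2 = (- a - b) ^+ 2 by move=> a b; ring.
exact: h.
Qed.


Theorem proposition4 (R : realType) (L : nat) (n : 'I_L -> nat)
    (g v d : forall l : 'I_L, 'rV[R]_(n l))
    (hL : (1 <= L)%N) (hn : forall l, (1 <= n l)%N)
    (hd : forall l i, 0 < d l 0 i)
    (hw : forall l, let w := v l - hdiv (g l) (d l) in
          (exists i, 0 < w 0 i) /\ (exists i, w 0 i < 0))
    (u : forall l : 'I_L, 'rV[R]_(n l)) (alpha beta : 'I_L -> R)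
    (hfeas : feasible u alpha beta)
    (hmin : forall (u' : forall l : 'I_L, 'rV[R]_(n l)) (alpha' beta' : 'I_L -> R),
        feasible u' alpha' beta' -> objective g v d u <= objective g v d u') :
  forall l : 'I_L,
    let w := v l - hdiv (g l) (d l) in
    let p := Ipos (alpha l / 2) w in
    let q := Ineg (beta l / 2) w in
    u l = alpha l *: p + beta l *: q /\
    alpha l = norm1 (hmul (hmul p (d l)) w) / norm1 (hmul p (d l)) /\
    beta l = norm1 (hmul (hmul q (d l)) w) / norm1 (hmul q (d l)).
Proof.
move=> l.
pose J' (u0 : forall l', 'rV[R]_(n l')) := \sum_(l' < L) \sum_(i < n l')
   d l' 0 i * (u0 l' 0 i - (v l' - hdiv (g l') (d l')) 0 i) ^+ 2.
pose K := \sum_(l' < L) \sum_(i < n l') (- (g l' 0 i ^+ 2 / (2 * d l' 0 i))).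
have objE : forall u0, objective g v d u0 = 2^-1 * J' u0 + K.
  move=> u0; rewrite /objective /J' /K mulr_sumr -big_split; apply eq_bigr => l' _ /=.
  rewrite mulr_sumr -big_split; apply eq_bigr => i _ /=; rewrite !mxE.
  have h := hd l' i.
  field; rewrite lt0r_neq0 //.
have Jmin : forall u' a' b', feasible u' a' b' -> J' u <= J' u'.
  move=> u' a' b' hf; have := hmin _ _ _ hf; rewrite !objE => h.
  have : 2^-1 * J' u <= 2^-1 * J' u' by lra.
  by rewrite ler_pM2l // invr_gt0 ltr0n.
have Pl : forall a b (x : 'I_(n l) -> R), 0 < a -> 0 < b ->
    (forall j, x j \in [:: -b; 0; a]) ->
    Jb (fun j => d l 0 j) (fun j => (v l - hdiv (g l) (d l)) 0 j) (fun j => u l 0 j)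
    <= Jb (fun j => d l 0 j) (fun j => (v l - hdiv (g l) (d l)) 0 j) x.
  move=> a b x ha hb hx.
  pose xf (k : nat) := oapp x 0 (insub k : option 'I_(n l)).
  have xfE : forall j : 'I_(n l), xf j = x j by move=> j; rewrite /xf valK.
  pose u' := fun l' => \row_(j < n l') (if l' == l then xf j else u l' 0 j).
  pose a' := fun l' => if l' == l then a else alpha l'.
  pose b' := fun l' => if l' == l then b else beta l'.
  have hf : feasible u' a' b'.
    move=> l'; rewrite /a' /b' /u'; case: eqVneq => [e|ne].
      subst l'; split => //; split => // j; rewrite mxE xfE; exact: hx.
    have [h1 [h2 h3]] := hfeas l'; split => //; split => // j; rewrite mxE; exact: h3.
  have := Jmin _ _ _ hf; rewrite /J' (bigD1 l) //= (bigD1 l (P := xpredT)) //=.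
  have -> : \sum_(l' < L | l' != l) \sum_(i < n l')
     d l' 0 i * (u' l' 0 i - (v l' - hdiv (g l') (d l')) 0 i) ^+ 2 =
     \sum_(l' < L | l' != l) \sum_(i < n l')
     d l' 0 i * (u l' 0 i - (v l' - hdiv (g l') (d l')) 0 i) ^+ 2.
    apply eq_bigr => l' ne; apply eq_bigr => j _; by rewrite /u' mxE (negbTE ne).
  have -> : \sum_(i < n l) d l 0 i * (u' l 0 i - (v l - hdiv (g l) (d l)) 0 i) ^+ 2 =
     Jb (fun j => d l 0 j) (fun j => (v l - hdiv (g l) (d l)) 0 j) x.
    rewrite /Jb; apply eq_bigr => j _; by rewrite /u' mxE eqxx xfE.
  rewrite /Jb => h; lra.
have [[k hk] [k' hk']] := hw l.
move=> w p q.
have hal := (proj1 (hfeas l)); have hbe := proj1 (proj2 (hfeas l)).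
have hy := proj2 (proj2 (hfeas l)).
have hdd : forall j, 0 < (fun j => d l 0 j) j by move=> j; exact: hd.
have [HAi [A0a [ja hja]]] := @half R (n l) (fun j => d l 0 j) (fun j => w 0 j) (fun j => u l 0 j) (alpha l) (beta l) hdd hal hbe hy Pl (ex_intro _ k hk).
have hy' : forall j, (fun j => - u l 0 j) j \in [:: - alpha l; 0; beta l].
  move=> j /=; move: (hy j); rewrite !inE => /or3P [] /eqP ->;
  by rewrite ?opprK ?oppr0 eqxx ?orbT.
have P' : forall a b (x : 'I_(n l) -> R), 0 < a -> 0 < b ->
    (forall j, x j \in [:: -b; 0; a]) ->
    Jb (fun j => d l 0 j) (fun j => - w 0 j) (fun j => - u l 0 j)
    <= Jb (fun j => d l 0 j) (fun j => - w 0 j) x.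
  move=> a b x ha hb hx; rewrite !JbN.
  have -> : Jb (fun j => d l 0 j) (fun j => w 0 j) (fun j => - - u l 0 j) =
     Jb (fun j => d l 0 j) (fun j => w 0 j) (fun j => u l 0 j).
    by rewrite /Jb; apply eq_bigr => j _; rewrite opprK.
  apply: Pl hb ha _ => j; move: (hx j); rewrite !inE => /or3P [] /eqP ->;
  by rewrite ?opprK ?oppr0 eqxx ?orbT.
have hk2 : exists k0, 0 < (fun j => - w 0 j) k0 by exists k'; rewrite /= oppr_gt0.
have [HBi [A0b [jb hjb]]] := @half R (n l) (fun j => d l 0 j) (fun j => - w 0 j) (fun j => - u l 0 j) (beta l) (alpha l) hdd hbe hal hy' P' hk2.
rewrite /= in HAi HBi hja hjb.
rewrite /Ab /= in A0a A0b.
clearbody w.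
have Ha' : forall i, (u l 0 i == alpha l) = (alpha l / 2 < w 0 i).
  by move=> i; apply/eqP/idP => /HAi.
have Hb' : forall i, (- u l 0 i == beta l) = (w 0 i < - (beta l / 2)).
  by move=> i; rewrite ltrNr; apply/eqP/idP => /HBi.
split.
  apply/rowP => i; rewrite /p /q !mxE.
  case: ifP => h1; case: ifP => h2.
  - lra.
  - by move/HAi: h1 => ->; rewrite mulr1 mulr0 addr0.
  - rewrite -Hb' in h2; move/eqP: h2 => h2; lra.
  - rewrite -Ha' in h1; rewrite -Hb' in h2.
    move: (hy i) h1 h2; rewrite !inE => /or3P [] /eqP ->; rewrite ?opprK ?eqxx //.
    by rewrite !mulr0 addr0.
split.
  set B := \sum_i (if u l 0 i == alpha l then d l 0 i else 0).
  have N1 : norm1 (hmul p (d l)) = B.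
    rewrite /norm1; apply eq_bigr => i _; rewrite /p !mxE -Ha'.
    case: ifP => _; last by rewrite mul0r normr0.
    by rewrite mul1r ger0_norm // ltW.
  have N2 : norm1 (hmul (hmul p (d l)) w) =
      \sum_i (if u l 0 i == alpha l then d l 0 i * w 0 i else 0).
    rewrite /norm1; apply eq_bigr => i _; rewrite /p !mxE -Ha'.
    case: ifP => hi; last by rewrite mul0r mul0r normr0.
    rewrite mul1r ger0_norm // mulr_ge0 //; first exact: ltW.
    move: hi; rewrite Ha' => hi; lra.
  have Bpos : 0 < B.
    rewrite /B (bigD1 ja) //= hja eqxx.
    have : 0 <= \sum_(i < n l | i != ja) (if u l 0 i == alpha l then d l 0 i else 0).
      by apply: sumr_ge0 => i _; case: ifP => _ //; exact: ltW.
    have := hd l ja; lra.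
  have eS : \sum_i (if u l 0 i == alpha l then d l 0 i * w 0 i else 0) = alpha l * B.
    suff : \sum_i (if u l 0 i == alpha l then d l 0 i * (alpha l - w 0 i) else 0) =
        alpha l * B - \sum_i (if u l 0 i == alpha l then d l 0 i * w 0 i else 0) by rewrite [LHS]A0a; lra.
    rewrite /B mulr_sumr -sumrB.
    apply eq_bigr => i _; case: ifP => _; [ring | by rewrite mulr0 subrr].
  by rewrite N1 N2 eS mulfK // lt0r_neq0.
set B := \sum_i (if - u l 0 i == beta l then d l 0 i else 0).
have N1 : norm1 (hmul q (d l)) = B.
  rewrite /norm1; apply eq_bigr => i _; rewrite /q !mxE -Hb'.
  case: ifP => _; last by rewrite mul0r normr0.
  by rewrite mulN1r normrN ger0_norm // ltW.
have N2 : norm1 (hmul (hmul q (d l)) w) =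
    \sum_i (if - u l 0 i == beta l then d l 0 i * - w 0 i else 0).
  rewrite /norm1; apply eq_bigr => i _; rewrite /q !mxE -Hb'.
  case: ifP => hi; last by rewrite mul0r mul0r normr0.
  rewrite mulN1r mulNr normrN normrM ger0_norm ?(ltW (hd _ _)) // ler0_norm //.
  move: hi; rewrite Hb' => hi; lra.
have Bpos : 0 < B.
  rewrite /B (bigD1 jb) //= hjb eqxx.
  have : 0 <= \sum_(i < n l | i != jb) (if - u l 0 i == beta l then d l 0 i else 0).
    by apply: sumr_ge0 => i _; case: ifP => _ //; exact: ltW.
  have := hd l jb; lra.
have eS : \sum_i (if - u l 0 i == beta l then d l 0 i * - w 0 i else 0) = beta l * B.
  suff : \sum_i (if - u l 0 i == beta l then d l 0 i * (beta l - - w 0 i) else 0) =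
      beta l * B - \sum_i (if - u l 0 i == beta l then d l 0 i * - w 0 i else 0) by rewrite [LHS]A0b; lra.
  rewrite /B mulr_sumr -sumrB.
  apply eq_bigr => i _; case: ifP => _; [ring | by rewrite mulr0 subrr].
by rewrite N1 N2 eS mulfK // lt0r_neq0.
Qed.
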